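(* Let $(\mathcal{X},\rho,\nu)$ be a bounded length space with finite doubling dimension and a finite Borel measure $\nu$. Let $\eta\in\mathcal{F}_0$, and let $\mathfrak{b}=\mathfrak{b}(\partial_\eta\mathcal{X})$ and $\mathfrak{m}=\mathfrak{m}(\partial_\eta\mathcal{X})$. Then for any $c_1,c_2>0$ there are constants $C>0$ and $r_0>0$ such that for all $0<r<r_0$, \[\mathcal{N}_{\mathrm{ML},\eta}(V_r)\le C r^{-(\mathfrak{b}+c_1)}\qquad\text{and}\qquad\nu(V_r^c)\le(\mathfrak{m}+c_2)\, r,\] where $V_r=\{x\in\mathcal{X}:\mathrm{margin}_\eta(x)\ge r\}$.
   Context: A length space: $\rho(x,x')=\inf_\gamma\ell(\gamma)$ over continuous paths from $x$ to $x'$. Finite doubling dimension $d$: every open ball $B(x,r)$ can be covered by $2^d$ balls of radius $r/2$. $\mathrm{margin}_\eta(x)=\inf\{\rho(x,x'):\eta(x')\ne\eta(x)\}$; $\partial_\eta\mathcal{X}=\{x:\mathrm{margin}_\eta(x)=0\}$; $\mathcal{F}_0$ = measurable $\eta$ with $\nu(\partial_\eta\mathcal{X})=0$. A set $U$ is mutually-labeling for $\eta$ if $\sup_{z,z'\in U}\rho(z,z')<\mathrm{margin}_\eta(x)$ for all $x\in U$; $\mathcal{N}_{\mathrm{ML},\eta}(V)$ is the minimal number of mutually-labeling sets covering $V$. $\mathcal{N}_r(A)$ is the minimal number of radius-$r$ balls covering $A$; $\mathfrak{b}(A)=\limsup_{r\to0}\log\mathcal{N}_r(A)/\log(1/r)$;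 $A^r=\bigcup_{x\in A}B(x,r)$; $\mathfrak{m}(A)=\limsup_{r\to0}(\nu(A^r)-\nu(A))/r$. *)

(* Defs.v *)
From HB Require Import structures.
From mathcomp Require Import all_boot all_order all_algebra.
From mathcomp Require Import all_classical all_reals all_analysis.
Set Implicit Arguments. Unset Strict Implicit. Unset Printing Implicit Defensive.
Import Order.TTheory GRing.Theory Num.Theory.
Local Open Scope classical_set_scope.
Local Open Scope ring_scope.

Section Defs.
Context {R : realType} {X : Type}.
Variable rho : X -> X -> R.

Definition is_metric : Prop :=
  [/\ (forall x y, 0 <= rho x y),
      (forall x y, rho x y = 0 <-> x = y),
      (forall x y, rho x y = rho y x) &
      (forall x y z, rho x z <= rho x y + rho y z)].

Definition rball (x : X) (r : R) : set X := [set y | rho x y < r].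

Definition ropen (A : set X) : Prop :=
  forall x, A x -> exists2 e, 0 < e & rball x e `<=` A.

Definition bounded_space : Prop := exists D : R, forall x y, rho x y <= D.

(* continuity of a path g : [0,1] -> X (only values on [0,1] matter) *)
Definition path_continuous (g : R -> X) : Prop :=
  forall t, 0 <= t <= 1 -> forall e, 0 < e ->
    exists2 d, 0 < d & forall s, 0 <= s <= 1 -> `|s - t| < d -> rho (g t) (g s) < e.

Definition path_length (g : R -> X) : \bar R :=
  ereal_sup [set l | exists (n : nat) (t : nat -> R),
    [/\ t 0%N = 0, t n = 1, (forall i, (i < n)%N -> t i <= t i.+1) &
        l = (\sum_(i < n) rho (g (t i)) (g (t i.+1)))%:E]].

Definition length_space : Prop :=
  forall x x', (rho x x')%:E =
    ereal_inf [set l | exists g, [/\ path_continuous g, g 0 = x, g 1 = x' &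
                                      l = path_length g]].

Definition finite_doubling_dimension : Prop :=
  exists d : nat, forall x (r : R), 0 < r ->
    exists c : nat -> X, rball x r `<=` \bigcup_(i in `I_(2 ^ d)) rball (c i) (r / 2).

(* margin_eta(x) = inf { rho(x,x') : eta x' <> eta x }  (inf of empty = +oo) *)
Definition margin {Y : Type} (eta : X -> Y) (x : X) : \bar R :=
  ereal_inf [set (rho x x')%:E | x' in [set x' | eta x' <> eta x]].

Definition boundary {Y : Type} (eta : X -> Y) : set X :=
  [set x | margin eta x = 0%E].

Definition mutually_labeling {Y : Type} (eta : X -> Y) (U : set X) : Prop :=
  forall x, U x ->
    (ereal_sup [set l | exists z z', [/\ U z, U z' & l = (rho z z')%:E]]
       < margin eta x)%E.

(* N_ML(V): minimal number of mutually labeling sets covering V (+oo if none) *)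
Definition N_ML {Y : Type} (eta : X -> Y) (V : set X) : \bar R :=
  ereal_inf [set (n%:R)%:E | n in [set n : nat | exists U : nat -> set X,
     (forall i, (i < n)%N -> mutually_labeling eta (U i)) /\
     V `<=` \bigcup_(i in `I_n) U i]].

(* N_r(A): minimal number of radius-r balls covering A (+oo if none) *)
Definition covnum (A : set X) (r : R) : \bar R :=
  ereal_inf [set (n%:R)%:E | n in [set n : nat | exists c : nat -> X,
     A `<=` \bigcup_(i in `I_n) rball (c i) r]].

Definition limsup0 (f : R -> \bar R) : \bar R :=
  ereal_inf [set ereal_sup [set f r | r in [set r | 0 < r < d]] | d in [set d | 0 < d]].

(* upper box-counting dimension b(A) = limsup_{r->0} log N_r(A) / log(1/r);
   convention: N_r is counted as max(1, N_r), so that b(emptyset) = 0 *)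
Definition bdim (A : set X) : \bar R :=
  limsup0 (fun r => (lne (Order.max 1%E (covnum A r)) * ((ln r^-1)^-1)%:E)%E).

Definition enlarge (A : set X) (r : R) : set X := \bigcup_(x in A) rball x r.

Definition mdim (nu : set X -> \bar R) (A : set X) : \bar R :=
  limsup0 (fun r => ((nu (enlarge A r) - nu A) * (r^-1)%:E)%E).

End Defs.

Definition rpowe {R : realType} (r : R) (e : \bar R) : \bar R :=
  expeR (e * (ln r)%:E)%E.

(* Main.v *)
Require Import Defs.
Set Warnings "-notation-overridden,-ambiguous-paths,-notation-incompatible-prefix,-deprecated".
From HB Require Import structures.
From mathcomp Require Import all_boot all_order all_algebra.
From mathcomp Require Import all_classical all_reals all_analysis.
From mathcomp Require Import ring lra.
Import Order.TTheory GRing.Theory Num.Theory.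
Local Open Scope classical_set_scope.
Local Open Scope ring_scope.

Section Aux.
Context {R : realType} {X : Type} (rho : X -> X -> R) {Y : eqType} (eta : X -> Y).
Hypothesis Hm : is_metric rho.

Lemma rho_ge0 x y : 0 <= rho x y. Proof. by case: Hm. Qed.
Lemma rho_sym x y : rho x y = rho y x. Proof. by case: Hm. Qed.
Lemma rho_tri x y z : rho x z <= rho x y + rho y z. Proof. by case: Hm. Qed.
Lemma rho_xx x : rho x x = 0. Proof. by case: Hm => _ H _ _; apply/H. Qed.

Lemma margin_ge0 x : (0 <= margin rho eta x)%E.
Proof. by apply/ereal_infP => _ [x' _ <-]; rewrite lee_fin rho_ge0. Qed.

Lemma margin_lt x (s : R) : (margin rho eta x < s%:E)%E ->
  exists x', eta x' <> eta x /\ rho x x' < s.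
Proof.
by move=> /ereal_inf_lt[_ [x' Hx' <-]]; rewrite lte_fin => H; exists x'.
Qed.

Lemma le_margin x (t : R) : (forall x', eta x' <> eta x -> t <= rho x x') ->
  (t%:E <= margin rho eta x)%E.
Proof. by move=> H; apply/ereal_infP => _ [x' Hx' <-]; rewrite lee_fin H. Qed.

Lemma boundaryP z : (forall e : R, 0 < e -> exists x', eta x' <> eta z /\ rho z x' < e) ->
  boundary rho eta z.
Proof.
move=> H; rewrite /boundary /=.
have Hle : forall e : R, 0 < e -> (margin rho eta z <= e%:E)%E.
  move=> e e0; have [x' [Hx' Hlt]] := H e e0.
  apply: ge_ereal_inf; exists (rho z x')%:E; first by exists x'.
  by rewrite lee_fin ltW.
have := margin_ge0 z; move: Hle.
case: (margin rho eta z) => [m| |] Hle Hge.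
- have m0 : 0 <= m by rewrite -lee_fin.
  case: (ltrP 0 m) => hm; last by apply/congr1/le_anti; rewrite hm m0.
  have := Hle (m / 2) (divr_gt0 hm (ltr0Sn _ 1)); rewrite lee_fin => hh.
  exfalso; move: hh; apply/negP; rewrite -ltNge; lra.
- by have := Hle 1 ltr01.
- by [].
Qed.


Lemma path_len_ge (g : R -> X) (t : R) : 0 <= t <= 1 ->
  ((rho (g 0) (g t))%:E <= path_length rho g)%E.
Proof.
move=> /andP[t0 t1].
pose tt := fun i : nat => if i == 0%N then 0 else if i == 1%N then t else 1.
apply: (@le_trans _ _ ((\sum_(i < 2) rho (g (tt i)) (g (tt i.+1)))%:E)).
  rewrite !big_ord_recr big_ord0 /= add0r lee_fin /tt /=.
  by rewrite lerDl rho_ge0.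
apply: ereal_sup_ubound; exists 2%N, tt; split => //.
by case=> [|[|]] //= _; rewrite /tt /=.
Qed.

Lemma path_boundary x (s : R) : length_space rho ->
  (margin rho eta x < s%:E)%E ->
  exists z, boundary rho eta z /\ rho x z < s.
Proof.
move=> HL /margin_lt[x' [Hx' Hlt]].
have : ((rho x x')%:E < s%:E)%E by rewrite lte_fin.
rewrite HL => /ereal_inf_lt[_ [g [gc g0 g1 ->]] Hl].
pose T := [set t : R | 0 <= t <= 1 /\ eta (g t) <> eta x].
have T1 : T 1 by split; [rewrite ler01 lexx | rewrite g1].
have Tlb : has_lbound T by exists 0 => t [/andP[]].
have Tne : T !=set0 by exists 1.
pose ts := inf T.
have ts0 : 0 <= ts by apply: lb_le_inf => // t [/andP[]].
have ts1 : ts <= 1 by apply: ge_inf.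
have tsb : 0 <= ts <= 1 by rewrite ts0 ts1.
exists (g ts); split; last first.
  have H := @path_len_ge g ts tsb; rewrite g0 in H.
  by rewrite -lte_fin; apply: le_lt_trans Hl.
apply: boundaryP => e e0.
have [d d0 Hd] := gc ts tsb e e0.
case: (eqVneq (eta (g ts)) (eta x)) => Hz.
- have [t Tt tlt] := inf_adherent d0 (conj Tne Tlb).
  have tge : ts <= t by apply: ge_inf.
  exists (g t); split; first by rewrite Hz; case: Tt.
  case: Tt => /andP[t0 t1] _.
  apply: Hd; first by rewrite t0 t1.
  rewrite ger0_norm; [|by rewrite subr_ge0]; rewrite /ts; lra.
- have tsp : 0 < ts.
    rewrite lt_neqAle ts0 andbT; apply/eqP => E.
    by move: Hz; rewrite -E g0 eqxx.
  pose t := ts - Order.min ts d / 2.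
  have hm1 : 0 < Order.min ts d by rewrite lt_min tsp d0.
  have hm2 : Order.min ts d <= ts by rewrite ge_min lexx.
  have hm3 : Order.min ts d <= d by rewrite ge_min lexx orbT.
  have t0 : 0 <= t by rewrite /t; lra.
  have t1 : t <= 1 by rewrite /t; lra.
  have tlt : t < ts by rewrite /t; lra.
  have Ht : eta (g t) = eta x.
    apply: contrapT => Hn.
    have : ts <= t by apply: ge_inf => //; split => //; rewrite t0 t1.
    by rewrite leNgt tlt.
  exists (g t); split; first by rewrite Ht; apply/eqP; rewrite eq_sym.
  apply: Hd; first by rewrite t0 t1.
  rewrite distrC ger0_norm; rewrite /t; lra.
Qed.


Definition cov (A : set X) (r : R) (n : nat) :=
  exists c : nat -> X, A `<=` \bigcup_(i in `I_n) rball rho (c i) r.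

Definition MLcov (V : set X) (n : nat) :=
  exists U : nat -> set X, (forall i, (i < n)%N -> mutually_labeling rho eta (U i)) /\
     V `<=` \bigcup_(i in `I_n) U i.

Lemma N_ML_le V n : MLcov V n -> (N_ML rho eta V <= (n%:R)%:E)%E.
Proof. by move=> H; apply: ge_ereal_inf; exists (n%:R)%:E => //; exists n. Qed.

Lemma MLcov_sub V V' n : V' `<=` V -> MLcov V n -> MLcov V' n.
Proof. by move=> HV [U [H1 H2]]; exists U; split => //; apply: subset_trans H2. Qed.

Lemma ML0 : mutually_labeling rho eta set0.
Proof. by []. Qed.

Lemma MLcov0 V : V `<=` set0 -> MLcov V 0.
Proof. by move=> HV; exists (fun=> set0); split => // x /HV. Qed.

Lemma MLcov_union A B n1 n2 : MLcov A n1 -> MLcov B n2 -> MLcov (A `|` B) (n1 + n2).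
Proof.
move=> [U1 [H1 C1]] [U2 [H2 C2]].
exists (fun i => if (i < n1)%N then U1 i else U2 (i - n1)%N); split.
  move=> i hi; case: ifP => hi1; first exact: H1.
  by apply: H2; rewrite ltn_subLR // leqNgt hi1.
move=> x [/C1 [i hi Hx]|/C2 [i hi Hx]].
  by exists i; [rewrite /= in hi *; apply: ltn_addr | rewrite hi].
exists (n1 + i)%N; first by rewrite /= ltn_add2l.
by rewrite ltnNge leq_addr /= addKn.
Qed.

Lemma ML_ball A c (rr t : R) : A `<=` rball rho c rr ->
  (forall x, A x -> (t%:E <= margin rho eta x)%E) -> 2 * rr < t ->
  mutually_labeling rho eta A.
Proof.
move=> HA Hm2 Ht x Ax.
apply: (@le_lt_trans _ _ (2 * rr)%:E); last first.
  by apply: lt_le_trans (Hm2 _ Ax); rewrite lte_fin.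
apply: ge_ereal_sup => _ [z [z' [Az Az' ->]]].
rewrite lee_fin; have := HA _ Az; have := HA _ Az'; rewrite /rball /= => h1 h2.
have := rho_tri z c z'; rewrite (rho_sym z c); lra.
Qed.

Lemma cov_ML A rr n t : cov A rr n ->
  (forall x, A x -> (t%:E <= margin rho eta x)%E) -> 2 * rr < t -> MLcov A n.
Proof.
move=> [c Hc] Hm2 Ht; exists (fun i => rball rho (c i) rr `&` A); split.
  move=> i _; apply: (ML_ball _ (c i) rr t _ _ Ht).
    by move=> x [].
  by move=> x [_ /Hm2].
by move=> x Ax; have [i hi Hx] := Hc _ Ax; exists i.
Qed.

Lemma cov_sub A B rr n : B `<=` A -> cov A rr n -> cov B rr n.
Proof. by move=> HB [c Hc]; exists c; apply: subset_trans Hc. Qed.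

Lemma cov_mono A r1 r2 n : r1 <= r2 -> cov A r1 n -> cov A r2 n.
Proof.
move=> hr [c Hc]; exists c => x /Hc [i hi Hx]; exists i => //.
by rewrite /rball /= in Hx *; lra.
Qed.

Lemma cov_enlarge A B rr s n : cov A rr n ->
  (forall x, B x -> exists z, A z /\ rho x z < s) -> cov B (rr + s) n.
Proof.
move=> [c Hc] HB; exists c => x /HB [z [Az hz]].
have [i hi Hi] := Hc _ Az; exists i => //; rewrite /rball /= in Hi *.
have := rho_tri (c i) z x; rewrite (rho_sym z x); lra.
Qed.

Variable d : nat.
Hypothesis Hd : forall x (r : R), 0 < r ->
    exists c : nat -> X, rball rho x r `<=` \bigcup_(i in `I_(2 ^ d)) rball rho (c i) (r / 2).

Lemma cov_half A rr n : 0 < rr -> cov A rr n -> cov A (rr / 2) (n * 2 ^ d).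
Proof.
move=> r0 [c Hc].
have [c' Hc'] := choice (fun i => @Hd (c i) rr r0).
exists (fun j => c' (j %/ 2 ^ d)%N (j %% 2 ^ d)%N) => x /Hc [i hi /Hc' [k hk Hx]].
have p0 : (0 < 2 ^ d)%N by rewrite expn_gt0.
exists (i * 2 ^ d + k)%N.
  rewrite /= in hi hk *.
  apply: (@leq_trans ((i.+1) * 2 ^ d)%N); last by rewrite leq_mul2r hi orbT.
  by rewrite mulSn addnC ltn_add2r.
rewrite /= divnMDl // divn_small // addn0.
by rewrite modnMDl modn_small.
Qed.

Lemma cov_iter A rr n m : 0 < rr -> cov A rr n -> cov A (rr / 2 ^+ m) (n * 2 ^ (d * m)).
Proof.
move=> r0; elim: m => [|m IH] H.
  by rewrite expr0 divr1 muln0 expn0 muln1.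
have E : rr / 2 ^+ m.+1 = rr / 2 ^+ m / 2 by rewrite exprSr invfM mulrA.
rewrite E mulnS expnD mulnA [(n * 2 ^ d * _)%N]mulnAC; apply: cov_half; last exact: IH.
by rewrite divr_gt0 // exprn_gt0.
Qed.


Lemma band_cov t n : length_space rho -> 0 < t -> cov (boundary rho eta) (2 * t) n ->
  MLcov [set x | (t%:E <= margin rho eta x)%E /\ (margin rho eta x < (2 * t)%:E)%E]
    (n * 2 ^ (d * 4)).
Proof.
move=> HL t0 Hc.
have H1 : cov [set x | (t%:E <= margin rho eta x)%E /\ (margin rho eta x < (2 * t)%:E)%E]
   (2 * t + 2 * t) n.
  apply: cov_enlarge Hc _ => x [_ hx].
  have [z [bz hz]] := path_boundary x (2 * t) HL hx.
  by exists z.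
have r0 : 0 < 2 * t + 2 * t by lra.
have H2 := @cov_iter _ _ _ 4 r0 H1.
apply: (@cov_ML _ _ _ t H2); first by move=> x [].
have -> : (2:R) ^+ 4 = 16 by rewrite !exprS expr0; lra.
lra.
Qed.

Lemma top_cov (x0 : X) (D rr : R) : (forall x y, rho x y <= D) -> 0 < rr -> exists n, cov setT rr n.
Proof.
move=> HD r0.
have D0 : 0 <= D by rewrite -(rho_xx x0) HD.
have H1 : cov setT (D + 1) 1.
  exists (fun=> x0) => x _; exists 0%N => //; rewrite /rball /=.
  by have := HD x0 x; lra.
have hb : 0 <= (D + 1) / rr by rewrite divr_ge0 // ?ltW //; lra.
set m := Num.Def.archi_bound ((D + 1) / rr).
have hm := archi_boundP hb; rewrite -/m in hm.
have r1 : 0 < D + 1 by lra.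
exists (1 * 2 ^ (d * m))%N; apply: (@cov_mono _ ((D + 1) / 2 ^+ m) _ _ _ (@cov_iter _ _ _ m r1 H1)).
have h2 : (m%:R : R) <= 2 ^+ m.
  by rewrite -natrX ler_nat ltnW // ltn_expl.
have p2 : 0 < (2:R) ^+ m by rewrite exprn_gt0.
rewrite ler_pdivrMr //.
rewrite ltr_pdivrMr // in hm.
have : rr * m%:R <= rr * 2 ^+ m by rewrite ler_pM2l.
lra.
Qed.


Lemma bdim_cov (A : set X) (b e : R) : bdim rho A = b%:E -> b < e ->
  exists s1, [/\ 0 < s1, s1 <= 1 &
    forall s, 0 < s < s1 -> exists n, cov A s n /\ n%:R < s `^ (-e)].
Proof.
move=> Hb be.
have : (bdim rho A < e%:E)%E by rewrite Hb lte_fin.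
rewrite /bdim /limsup0 => /ereal_inf_lt[_ [dd dd0 <-] Hlt].
have dd0' : 0 < dd by [].
exists (Order.min dd 1); split; first by rewrite lt_min dd0' ltr01.
  by rewrite ge_min lexx orbT.
move=> s /andP[s0]; rewrite lt_min => /andP[sd s1].
set N := covnum rho A s.
have Hf : (lne (Order.max 1%E N) * ((ln s^-1)^-1)%:E < e%:E)%E.
  apply: le_lt_trans Hlt; apply: ereal_sup_ubound; exists s => //=.
  by rewrite s0 sd.
have L0 : 0 < ln s^-1 by rewrite ln_gt0 // invf_gt1.
rewrite -[ln s^-1]invrK lte_pdivrMr ?invr_gt0 // invrK -EFinM in Hf.
have HN : (N < (s `^ (-e))%:E)%E.
  have M0 : (0 <= Order.max 1%E N)%E by rewrite le_max lee01.
  apply: (@le_lt_trans _ _ (Order.max 1%E N)); first by rewrite le_max lexx orbT.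
  move/eqP: (lneK_eq (Order.max 1%E N)); rewrite M0 => <-.
  apply: (@lt_le_trans _ _ (expeR (e * ln s^-1)%:E)); first by rewrite lte_expeR.
  rewrite /= /powR gt_eqF // lee_fin lnV ?posrE //.
  by rewrite mulrN mulNr.
have [_ [n Hn <-] Hlt2] := ereal_inf_lt HN.
by exists n; split => //; rewrite -lte_fin.
Qed.

Lemma bdim_ge0 (A : set X) : (0 <= bdim rho A)%E.
Proof.
apply/ereal_infP => _ [dd dd0 <-].
have dd0' : 0 < dd by [].
set s := Order.min dd 1 / 2.
have hm : 0 < Order.min dd 1 by rewrite lt_min dd0' ltr01.
have hm1 : Order.min dd 1 <= 1 by rewrite ge_min lexx orbT.
have hm2 : Order.min dd 1 <= dd by rewrite ge_min lexx.
have s0 : 0 < s by rewrite /s; lra.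
have s1 : s < 1 by rewrite /s; lra.
have sd : s < dd by rewrite /s; lra.
apply: le_trans (ereal_sup_ubound _); last first.
  by exists s => //=; rewrite s0 sd.
apply: mule_ge0.
  by rewrite lne_ge0 le_max lexx.
by rewrite lee_fin invr_ge0 ltW // ln_gt0 // invf_gt1.
Qed.


Lemma geom_sum (q : R) K : 0 <= q < 1 -> \sum_(k < K) q ^+ k.+1 <= (1 - q)^-1.
Proof.
move=> /andP[q0 q1].
have E : forall K, (\sum_(k < K) q ^+ k.+1) * (1 - q) = q - q ^+ K.+1.
  elim=> [|k IH]; first by rewrite big_ord0 expr1 mul0r subrr.
  by rewrite big_ord_recr /= mulrDl IH !exprS; ring.
have q1' : 0 < 1 - q by lra.
rewrite -(ler_pM2r q1') mulVf ?gt_eqF // E.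
have : 0 <= q ^+ K.+1 by rewrite exprn_ge0.
lra.
Qed.

Lemma pow2_split (e r : R) k : 0 <= r ->
  (2 ^+ k * r) `^ (-e) = (2 `^ (-e)) ^+ k * r `^ (-e).
Proof.
move=> r0; rewrite powRM ?exprn_ge0 //; congr (_ * _).
rewrite -powR_mulrn // -powRrM mulrC powRrM powR_mulrn //.

Qed.

Lemma partA (x0 : X) (D e s1 : R) : length_space rho -> (forall x y, rho x y <= D) ->
  0 < e -> 0 < s1 -> s1 <= 1 ->
  (forall s, 0 < s < s1 -> exists n, cov (boundary rho eta) s n /\ n%:R < s `^ (-e)) ->
  exists C, 0 < C /\ forall r, 0 < r < s1 / 2 ->
    (N_ML rho eta [set x | (r%:E <= margin rho eta x)%E] <= (C * r `^ (-e))%:E)%E.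
Proof.
move=> HL HD e0 s10 s11 Hs.
set tau := s1 / 2.
have tau0 : 0 < tau by rewrite /tau; lra.
have tau0' : 0 < tau / 4 by lra.
have [nT HT] := top_cov x0 D (tau / 4) HD tau0'.
have MT : MLcov [set x | (tau%:E <= margin rho eta x)%E] nT.
  apply: (@cov_ML _ _ _ tau); first exact: (@cov_sub setT _ _ _ (fun _ _ => I) HT).
    by move=> x.
  lra.
set q := 2 `^ (-e) : R.
have q0 : 0 <= q by apply: powR_ge0.
have q1 : q < 1.
  have E2 : ((2:R) == 0) = false by rewrite pnatr_eq0.
  rewrite /q /powR E2 expR_lt1 mulNr oppr_lt0.
  by rewrite mulr_gt0 // ln_gt0 // ltr1n.
have q1' : 0 < 1 - q by lra.
set P := (2 ^ (d * 4))%:R : R.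
have P0 : 0 < P by rewrite ltr0n expn_gt0.
exists (nT%:R + P / (1 - q) + 1); split.
  have : 0 <= nT%:R :> R by [].
  have : 0 < P / (1 - q) by rewrite divr_gt0.
  lra.
move=> r /andP[r0 rt].
have r1 : r < 1 by move: rt; rewrite /tau; lra.
pose Band K := [set x | [/\ (r%:E <= margin rho eta x)%E,
   (margin rho eta x < (2 ^+ K * r)%:E)%E & (margin rho eta x < tau%:E)%E]].
have HB : forall K, exists n, MLcov (Band K) n /\
    n%:R <= P * r `^ (-e) * \sum_(k < K) q ^+ k.+1.
  elim=> [|K [n [Hn Hb]]].
    exists 0%N; split; last by rewrite big_ord0 mulr0.
    apply: MLcov0 => x [h1 h2 _].
    by move: (le_lt_trans h1 h2); rewrite expr0 mul1r ltxx.
  have Hsub : Band K.+1 `<=` Band K `|`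
      [set x | ((2 ^+ K * r)%:E <= margin rho eta x)%E /\
               (margin rho eta x < (2 * (2 ^+ K * r))%:E)%E /\
               (margin rho eta x < tau%:E)%E].
    move=> x [h1 h2 h3].
    case: (ltP (margin rho eta x) (2 ^+ K * r)%:E) => h4.
      by left.
    by right; split => //; rewrite mulrA -exprS.
  case: (ltP (2 ^+ K * r) tau) => hK.
    have t0 : 0 < 2 ^+ K * r by rewrite mulr_gt0 // exprn_gt0.
    have [n2 [Hc2 Hn2]] : exists n, cov (boundary rho eta) (2 * (2 ^+ K * r)) n /\
        n%:R < (2 * (2 ^+ K * r)) `^ (-e).
      apply: Hs; rewrite mulr_gt0 //=; rewrite /tau in hK; lra.
    have M2 := band_cov (2 ^+ K * r) n2 HL t0 Hc2.
    exists (n + n2 * 2 ^ (d * 4))%N; split.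
      apply: MLcov_sub Hsub _; apply: MLcov_union => //.
      by apply: MLcov_sub M2 => x [? []].
    rewrite natrD natrM big_ord_recr /= mulrDr.
    apply: lerD => //.
    rewrite mulrA -exprS pow2_split ?ltW // in Hn2.
    rewrite -/P; set w := r `^ (- e) in Hn2 *; set qq := q ^+ K.+1 in Hn2 *.
    nra.
  exists (n + 0)%N; split.
    apply: MLcov_sub Hsub _; apply: MLcov_union => //.
    apply: MLcov0 => x [h1 [_ h3]].
    have h4 : (tau%:E <= (2 ^+ K * r)%:E)%E by rewrite lee_fin.
    by move: (le_lt_trans (le_trans h4 h1) h3); rewrite ltxx.
  rewrite addn0 big_ord_recr /= mulrDr.
  apply: (le_trans Hb); rewrite lerDl mulr_ge0 // ?exprn_ge0 //.
  by rewrite mulr_ge0 ?powR_ge0 // ltW.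
have hb : 0 <= tau / r by rewrite divr_ge0 // ltW.
set K := Num.Def.archi_bound (tau / r).
have hK := archi_boundP hb; rewrite -/K in hK.
have hK2 : tau <= 2 ^+ K * r.
  have h2 : (K%:R : R) <= 2 ^+ K by rewrite -natrX ler_nat ltnW // ltn_expl.
  rewrite ltr_pdivrMr // in hK.
  have : K%:R * r <= 2 ^+ K * r by rewrite ler_pM2r.
  lra.
have [n [Hn Hb]] := HB K.
have Hcov : MLcov [set x | (r%:E <= margin rho eta x)%E] (nT + n).
  have U := MLcov_union _ _ _ _ MT Hn.
  apply: (MLcov_sub _ _ _ _ U) => x hx.
  case: (leP tau%:E (margin rho eta x)) => h; first by left.
  right; split => //; apply: lt_le_trans h _; by rewrite lee_fin.
apply: le_trans (N_ML_le _ _ Hcov) _; rewrite lee_fin natrD.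
have re1 : 1 <= r `^ (-e).
  rewrite /powR gt_eqF // -expR0 ler_expR.
  have : ln r < 0 by rewrite ln_lt0 // r0 r1.
  nra.
have Hg := geom_sum q K (introT andP (conj q0 q1)).
set I := (1 - q)^-1 in Hg *; set S := \sum_(k < K) _ in Hb Hg.
set w := r `^ (- e) in Hb re1 *.
have h1 : P * w * S <= P * w * I by rewrite ler_pM2l // mulr_gt0 //; lra.
have h2 : (nT%:R : R) <= nT%:R * w by rewrite ler_peMr //.
have h3 : 0 <= P * I by apply: mulr_ge0; [exact: ltW | rewrite /I invr_ge0; exact: ltW].
nra.
Qed.

End Aux.

Section PartB.
Context {R : realType} {X : pointedType} (rho : X -> X -> R)
  (nu : {measure set (g_sigma_algebraType (ropen rho)) -> \bar R})
  {Y : countType} (eta : X -> Y).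
Hypothesis Hm : is_metric rho.

Lemma ropen_meas (A : set X) : ropen rho A ->
  measurable (A : set (g_sigma_algebraType (ropen rho))).
Proof. by move=> HA; apply: sub_sigma_algebra. Qed.

Lemma enlarge_open (A : set X) (r : R) : ropen rho (enlarge rho A r).
Proof.
move=> x [z Az hz]; rewrite /rball /= in hz.
exists (r - rho z x); first by rewrite subr_gt0.
move=> y; rewrite /rball /= => hy; exists z => //; rewrite /rball /=.
have := rho_tri rho Hm z x y; lra.
Qed.

Lemma notV_meas (r : R) : (forall y : Y, <<s ropen rho >> (eta @^-1` [set y])) ->
  measurable (~` [set x | (r%:E <= margin rho eta x)%E] : set (g_sigma_algebraType (ropen rho))).
Proof.
move=> Heta.
have -> : ~` [set x | (r%:E <= margin rho eta x)%E] =
   \bigcup_(y : Y) (eta @^-1` [set y] `&` [set x | exists x', eta x' <> y /\ rho x x' < r]).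
  apply/seteqP; split => x /=.
    move=> /negP; rewrite -ltNge => /(margin_lt rho eta) [x' [h1 h2]].
    by exists (eta x) => //; split => //; exists x'.
  move=> [y _ [/= <- [x' [h1 h2]]]]; apply/negP; rewrite -ltNge.
  apply: le_lt_trans (_ : (rho x x')%:E < r%:E)%E; last by rewrite lte_fin.
  by apply: ge_ereal_inf; exists (rho x x')%:E => //; exists x'.
apply: countable_bigcupT_measurable; first exact: countableP.
move=> y; apply: measurableI; first exact: Heta.
apply: ropen_meas => x [x' [h1 h2]].
exists (r - rho x x'); first by rewrite subr_gt0.
move=> z; rewrite /rball /= => hz; exists x'; split => //.
have := rho_tri rho Hm z x x'; rewrite (rho_sym rho Hm z x); lra.
Qed.


Lemma partB : length_space rho ->
  (forall y : Y, <<s ropen rho >> (eta @^-1` [set y])) ->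
  nu (boundary rho eta) = 0%E ->
  forall c2 : R, 0 < c2 -> exists r0 : R, 0 < r0 /\ forall r : R, 0 < r < r0 ->
    (nu (~` [set x | (r%:E <= margin rho eta x)%E]) <=
       (mdim rho nu (boundary rho eta) + c2%:E) * r%:E)%E.
Proof.
move=> HL Heta Hnu c2 c20.
set E := enlarge rho (boundary rho eta).
have Hle : forall r, 0 < r ->
    (nu (~` [set x | (r%:E <= margin rho eta x)%E]) <= nu (E r))%E.
  move=> r r0; apply: le_measure.
  - by rewrite inE; apply: notV_meas.
  - by rewrite inE; apply: ropen_meas; apply: enlarge_open.
  move=> x /negP; rewrite -ltNge => h.
  have [z [bz hz]] := path_boundary rho eta Hm x r HL h.
  by exists z => //; rewrite /rball /= rho_sym.
have m0 : (0 <= mdim rho nu (boundary rho eta))%E.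
  apply/ereal_infP => _ [dd dd0 <-].
  have dd0' : 0 < dd by [].
  apply: le_trans (ereal_sup_ubound _); last first.
    by exists (dd / 2) => //=; apply/andP; split; lra.
  rewrite Hnu sube0; apply: mule_ge0; first exact: measure_ge0.
  by rewrite lee_fin invr_ge0; lra.
move: m0; case Em: (mdim rho nu (boundary rho eta)) => [m| |] m0.
- have : (mdim rho nu (boundary rho eta) < (m + c2)%:E)%E by rewrite Em lte_fin; lra.
  rewrite /mdim /limsup0 => /ereal_inf_lt[_ [dd dd0 <-] Hlt].
  exists dd; split => // r /andP[r0 rd].
  apply: le_trans (Hle _ r0) _.
  rewrite -EFinD -lee_pdivrMr //.
  have : ((nu (E r) - nu (boundary rho eta)) * (r^-1)%:E <= (m + c2)%:E)%E.
    apply: le_trans (ltW Hlt); apply: ereal_sup_ubound; exists r => //=.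
    by rewrite r0 rd.
  by rewrite Hnu sube0.
- exists 1; split => // r /andP[r0 _].
  by rewrite addye // mulyr gtr0_sg // mul1e leey.
- by [].
Qed.

End PartB.

Theorem proposition3 (R : realType) (X : pointedType) (rho : X -> X -> R)
  (nu : {measure set (g_sigma_algebraType (ropen rho)) -> \bar R})
  (Y : countType) (eta : X -> Y) :
  is_metric rho -> length_space rho -> bounded_space rho ->
  finite_doubling_dimension rho ->
  (nu setT < +oo)%E ->
  (forall y : Y, <<s ropen rho >> (eta @^-1` [set y])) ->
  nu (boundary rho eta) = 0%E ->
  forall c1 c2 : R, 0 < c1 -> 0 < c2 ->
  exists C r0 : R, [/\ 0 < C, 0 < r0 &
    forall r : R, 0 < r < r0 ->
      let V := [set x | (r%:E <= margin rho eta x)%E] in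
      (N_ML rho eta V <= C%:E * rpowe r (- (bdim rho (boundary rho eta) + c1%:E)))%E /\
      (nu (~` V) <= (mdim rho nu (boundary rho eta) + c2%:E) * r%:E)%E].
Proof.
move=> Hm HL [D HD] [d Hd] _ Heta Hnu c1 c2 c10 c20.
have [rB [rB0 HB]] := partB rho nu eta Hm HL Heta Hnu c2 c20.
have [C [rA [C0 rA0 HA]]] : exists C rA : R, [/\ 0 < C, 0 < rA &
    forall r : R, 0 < r < rA ->
      (N_ML rho eta [set x | (r%:E <= margin rho eta x)%E] <=
         C%:E * rpowe r (- (bdim rho (boundary rho eta) + c1%:E)))%E].
  have := bdim_ge0 rho (boundary rho eta).
  case Eb: (bdim rho (boundary rho eta)) => [b| |] b0.
  - have b0' : 0 <= b by rewrite -lee_fin.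
    have [s1 [s10 s11 Hs]] := bdim_cov rho _ _ _ Eb (ltr_pwDr c10 (lexx b)).
    have [C [C0 HC]] := partA rho eta Hm d Hd (point : X) D _ _ HL HD (ltr_pwDr c10 b0') s10 s11 Hs.
    exists C, (s1 / 2); split => //; first lra.
    move=> r /andP[r0 rs].
    have -> : rpowe r (- (b%:E + c1%:E)) = (r `^ (- (b + c1)))%:E.
      by rewrite /rpowe /= /powR gt_eqF.
    by rewrite -EFinM; apply: HC; rewrite r0 rs.
  - exists 1, 1; split => // r /andP[r0 r1].
    have lr : ln r < 0 by rewrite ln_lt0 // r0 r1.
    by rewrite /rpowe /= mulNyr ltr0_sg // mulN1e /= mul1e leey.
  - by [].
exists C, (Order.min rA rB); split => //; first by rewrite lt_min rA0 rB0.
move=> r /andP[r0]; rewrite lt_min => /andP[rA' rB'] V; split.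
  by apply: HA; rewrite r0 rA'.
by apply: HB; rewrite r0 rB'.
Qed.
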